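(* For every $\tau\in[0,\infty)$, the Lane–Emden equation $x''(t)+\frac{2}{t}x'(t)+x(t)=0$, $t\in(\tau,\infty)$, is not Ulam stable on $(\tau,\infty)$.
   Context: Ulam stability (scalar case $n=1$, real or complex valued functions): the equation $\alpha(t)x''+\beta(t)x'+\gamma(t)x=f(t)$ is Ulam stable on $I$ if there exists $L>0$ such that for every $\varepsilon>0$ and every $\xi\in C^2(I)$ with $\sup_{t\in I}|\alpha\xi''+\beta\xi'+\gamma\xi-f|\le\varepsilon$, there is a solution $x$ with $\sup_{t\in I}|\xi(t)-x(t)|\le L\varepsilon$. *)

(* Defs.v *)
From Stdlib Require Import Reals.
From Coquelicot Require Import Coquelicot.
Open Scope R_scope.

Definition C2_on (I : R -> Prop) (x : R -> R) : Prop :=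
  forall t, I t ->
    ex_derive x t /\ ex_derive (Derive x) t /\ continuous (Derive (Derive x)) t.

Definition ode_lhs (alpha beta gamma x : R -> R) (t : R) : R :=
  alpha t * Derive (Derive x) t + beta t * Derive x t + gamma t * x t.

Definition ulam_stable (I : R -> Prop) (alpha beta gamma f : R -> R) : Prop :=
  exists L : R, 0 < L /\
    forall eps : R, 0 < eps ->
    forall xi : R -> R, C2_on I xi ->
      (forall t, I t -> Rabs (ode_lhs alpha beta gamma xi t - f t) <= eps) ->
      exists x : R -> R, C2_on I x /\
        (forall t, I t -> ode_lhs alpha beta gamma x t = f t) /\
        (forall t, I t -> Rabs (xi t - x t) <= L * eps).

(* Main.v *)
Require Import Defs.
From Stdlib Require Import Reals Lra Psatz FunctionalExtensionality.
From Coquelicot Require Import Coquelicot.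
Open Scope R_scope.

Definition xi0 (t : R) : R := (t * sin t + cos t) / 4.

Lemma xi0_d1 : Derive xi0 = fun t => t * cos t / 4.
Proof.
  apply functional_extensionality => t. apply is_derive_unique.
  unfold xi0. auto_derive; auto. field.
Qed.

Lemma xi0_d2 : Derive (Derive xi0) = fun t => (cos t - t * sin t) / 4.
Proof.
  rewrite xi0_d1. apply functional_extensionality => t. apply is_derive_unique.
  auto_derive; auto. field.
Qed.

Lemma const_on (tau : R) (E : R -> R) :
  (forall t, tau < t -> is_derive E t 0) ->
  forall a b, tau < a -> tau < b -> E a = E b.
Proof.
  intros H a b Ha Hb.
  destruct (MVT_gen E a b (fun _ => 0)) as [c [_ Hc]].
  - intros z Hz. apply H. unfold Rmin, Rmax in Hz. destruct (Rle_dec a b); lra.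
  - intros z Hz. apply continuity_pt_filterlim.
    assert (Hz' : tau < z) by (unfold Rmin, Rmax in Hz; destruct (Rle_dec a b); lra).
    exact (@ex_derive_continuous R_AbsRing R_NormedModule E z (ex_intro _ 0 (H z Hz'))).
  - lra.
Qed.

Theorem mainTheorem10 (tau : R) (htau : 0 <= tau) :
  ~ ulam_stable (fun t => tau < t) (fun _ => 1) (fun t => 2 / t) (fun _ => 1) (fun _ => 0).
Proof.
  intros [L [HL H]].
  destruct (H 1 Rlt_0_1 xi0) as [x [Cx [Sx Bx]]].
  - intros t _. rewrite xi0_d2, xi0_d1. repeat split.
    + eexists. unfold xi0. auto_derive; auto.
    + eexists. auto_derive; auto.
    + apply continuity_pt_filterlim. apply derivable_continuous_pt.
      apply derivable_pt_div. 2: apply derivable_pt_const. 2: lra.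
      apply derivable_pt_minus. apply derivable_pt_cos.
      apply derivable_pt_mult. apply derivable_pt_id. apply derivable_pt_sin.
  - intros t Ht. unfold ode_lhs. rewrite xi0_d2, xi0_d1. unfold xi0.
    replace ((1 * ((cos t - t * sin t) / 4) + 2 / t * (t * cos t / 4) +
              1 * ((t * sin t + cos t) / 4) - 0)) with (cos t) by (field; lra).
    pose proof (COS_bound t). apply Rabs_le. lra.
  - set (E := fun t => (x t + t * Derive x t) ^ 2 + (t * x t) ^ 2).
    assert (HE : forall t, tau < t -> is_derive E t 0).
    { intros t Ht. destruct (Cx t Ht) as [D1 [D2 _]].
      pose proof (Sx t Ht) as S. unfold ode_lhs in S.
      assert (Hdd : Derive (Derive x) t = - (2 / t) * Derive x t - x t) by lra.
      unfold E. auto_derive.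
      - repeat split; auto.
      - change (fun x0 : R => x x0) with x. change (fun x0 : R => Derive x x0) with (Derive x). rewrite Hdd. field. lra. }
    set (E0 := E (tau + 1)).
    assert (E0pos : 0 <= E0).
    { unfold E0, E. pose proof (pow2_ge_0 (tau + 1 * x (tau+1))).
      pose proof (pow2_ge_0 (x (tau + 1) + (tau + 1) * Derive x (tau + 1))).
      pose proof (pow2_ge_0 ((tau + 1) * x (tau + 1))). lra. }
    destruct (INR_unbounded (4 * (L + E0 + 2) + tau + 2)) as [n Hn].
    set (t := PI / 2 + 2 * INR n * PI).
    assert (Hsin : sin t = 1) by (unfold t; rewrite sin_period; apply sin_PI2).
    assert (Hcos : cos t = 0).
    { pose proof (sin2_cos2 t). rewrite Hsin in H0. unfold Rsqr in H0.
      assert (cos t * cos t = 0) by lra. destruct (Rmult_integral _ _ H1); lra. }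
    pose proof PI2_1 as HPI.
    assert (HnPI : INR n <= 2 * INR n * PI).
    { pose proof (pos_INR n). nra. }
    assert (Ht : tau < t) by (unfold t; lra).
    assert (Ht4 : 4 * (L + E0 + 2) < t) by (unfold t; lra).
    pose proof (Bx t Ht) as B. unfold xi0 in B. rewrite Hsin, Hcos in B.
    apply Rabs_le_between in B.
    assert (EE : E t = E0) by (unfold E0; apply (const_on tau); auto; lra).
    assert (E0ge : (t * x t) ^ 2 <= E0).
    { rewrite <- EE. unfold E. pose proof (pow2_ge_0 (x t + t * Derive x t)). lra. }
    assert (xlow : x t >= E0 + 1) by lra.
    assert (Ht1 : 1 <= t) by lra.
    assert (Htx : t * x t >= E0 + 1) by nra.
    assert (Hsq : (E0 + 1) ^ 2 <= (t * x t) ^ 2) by (apply pow_incr; lra).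
    nra.
Qed.
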